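(* Assume Case 2 holds and $d>0$. Let $(A,B)=(n_{s-1},m_{s-1})$ and for $n\ge1$ put $$(A_n,B_n)=(\gamma_n-(\gamma-A)d^{n-1},\ Bd^{n-1}),\qquad (A_n^*,B_n^* )=\big((\delta^{n-1}+\delta^{n-2}B+\cdots+\delta B^{n-2}+B^{n-1})A,\ B^n\big).$$ (i) If $\delta<T_{s-1}$, then for every $n\ge1$, $(A_n,B_n)$ is the vertex of $N(Q^n)$ immediately preceding $(\gamma_n,d^n)$ (in order of increasing $x$-coordinate), the segment joining them has slope $-l_1^{-1}$, and $\delta^n$ is strictly smaller than the $y$-intercept of the line through $(\gamma_n,d^n)$ and $(A_n,B_n)$. (ii) If $\delta=T_{s-1}$, then for every $n\ge1$, $(A_n^*,B_n^* )$ is the vertex of $N(Q^n)$ immediately preceding $(\gamma_n,d^n)$, the segment joining them has slope $-l_1^{-1}$, and $\delta^n$ equals the $y$-intercept of the line through $(\gamma_n,d^n)$ and $(A_n^*,B_n^* )$.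
   Context: Let $f(z,w)=(p(z),q(z,w))$ be a holomorphic skew product germ at the origin of $\mathbb{C}^2$ with $f(0,0)=(0,0)$, where $p(z)=a_\delta z^\delta+O(z^{\delta+1})$ with $a_\delta\neq0$ and integer $\delta\ge1$, and $q(z,w)=\sum_{i+j\ge1}b_{ij}z^iw^j$ is not identically zero. For $n\ge1$ write $f^n=(p^n,Q^n)$. The Newton polygon $N(g)$ of a nonzero germ $g=\sum g_{ij}z^iw^j$ is the convex hull of $\bigcup_{g_{ij}\neq0}\{(x,y):x\ge i,\ y\ge j\}$. Let $(n_1,m_1),\dots,(n_s,m_s)$ be the vertices of $N(q)$ with $n_1<\cdots<n_s$, $m_1>\cdots>m_s$; for $1\le k\le s-1$ let $T_k$ be the $y$-intercept of the line through $(n_k,m_k)$ and $(n_{k+1},m_{k+1})$. Case 2 means: $s>1$ and $\delta\le T_{s-1}$; set $(\gamma,d)=(n_s,m_s)$ and $l_1=\frac{n_s-n_{s-1}}{m_{s-1}-m_s}$. Define $\gamma_n=\gamma(\delta^{n-1}+\delta^{n-2}d+\cdots+d^{n-1})$. *)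

(* Defs.v *)
From mathcomp Require Import all_boot all_order all_algebra.
From mathcomp Require Import complex.
From mathcomp Require Import reals.
Set Implicit Arguments. Unset Strict Implicit. Unset Printing Implicit Defensive.
Import Order.TTheory GRing.Theory Num.Theory.
Local Open Scope ring_scope.

Section Defs.
Variable R : realType.
Local Notation C := (R[i]).

(* A formal power series in (z,w): s i j is the coefficient of z^i w^j. *)
Definition series := nat -> nat -> C.

Definition oneS : series := fun i j => if (i == 0%N) && (j == 0%N) then 1 else 0.
Definition wS : series := fun i j => if (i == 0%N) && (j == 1%N) then 1 else 0.

Definition mulS (F G : series) : series := fun i j =>
  \sum_(a < i.+1) \sum_(b < j.+1) F a b * G (i - a)%N (j - b)%N.

Definition powS (F : series) (k : nat) : series := iter k (mulS F) oneS.

(* Formal composition G(P(z,w), R(z,w)), valid when P(0,0) = R(0,0) = 0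
   (then P^a R^b has order >= a+b, so only a+b <= i+j contribute). *)
Definition compS (G P Q : series) : series := fun i j =>
  \sum_(a < (i + j).+1) \sum_(b < (i + j).+1)
     G a b * mulS (powS P a) (powS Q b) i j.

Definition liftz (p : nat -> C) : series := fun i j => if j == 0%N then p i else 0.

(* Q^n, the second component of f^n = (p^n, Q^n), via f^(n+1) = f^n o f;
   Q^0 = w (f^0 = id). *)
Fixpoint Qiter (p : nat -> C) (q : series) (n : nat) : series :=
  match n with
  | 0%N => wS
  | n'.+1 => compS (Qiter p q n') (liftz p) q
  end.

(* Convergence (positive radius) of a power series: holomorphic germ. *)
Definition convergent1 (p : nat -> C) : Prop :=
  exists M r : R, 0 < r /\ forall i, ComplexField.Normc.normc (p i) * r ^+ i <= M.
Definition convergent2 (q : series) : Prop :=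
  exists M r : R, 0 < r /\ forall i j, ComplexField.Normc.normc (q i j) * r ^+ (i + j) <= M.

Definition quadrants (g : series) (x y : R) : Prop :=
  exists i j : nat, g i j != 0 /\ (i%:R <= x) /\ (j%:R <= y).

Definition newton (g : series) (x y : R) : Prop :=
  exists (n : nat) (lam px py : 'I_n -> R),
    (forall k, 0 <= lam k) /\ \sum_(k < n) lam k = 1 /\
    (forall k, quadrants g (px k) (py k)) /\
    x = \sum_(k < n) lam k * px k /\ y = \sum_(k < n) lam k * py k.

Definition vertex (g : series) (x y : R) : Prop :=
  newton g x y /\
  forall (x1 y1 x2 y2 t : R), newton g x1 y1 -> newton g x2 y2 ->
    0 < t -> t < 1 -> x = t * x1 + (1 - t) * x2 -> y = t * y1 + (1 - t) * y2 ->
    x1 = x /\ y1 = y.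

Definition prev_vertex (g : series) (x1 y1 x2 y2 : R) : Prop :=
  vertex g x2 y2 /\ vertex g x1 y1 /\ x1 < x2 /\
  forall x y, vertex g x y -> ~ (x1 < x /\ x < x2).

Definition last_vertex (g : series) (x2 y2 : R) : Prop :=
  vertex g x2 y2 /\ forall x y, vertex g x y -> x <= x2.

Definition intercept (x1 y1 x2 y2 : R) : R := y1 - x1 * (y2 - y1) / (x2 - x1).

End Defs.

Definition gamma_n (gamma delta d n : nat) : nat :=
  (gamma * \sum_(k < n) delta ^ (n.-1 - k) * d ^ k)%N.
Definition Astar_n (A B delta n : nat) : nat :=
  ((\sum_(k < n) delta ^ (n.-1 - k) * B ^ k) * A)%N.

(* Main.v *)
Require Import Defs.
From mathcomp Require Import all_boot all_order all_algebra.
From mathcomp Require Import complex.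
From mathcomp Require Import reals.
From mathcomp Require Import zify ring lra.
Set Implicit Arguments. Unset Strict Implicit. Unset Printing Implicit Defensive.
Import Order.TTheory GRing.Theory Num.Theory.
Local Open Scope ring_scope.

Section Alg.
Variable R : realType.
Local Notation C := (R[i]).

Lemma prod0 (x y : C) : (x != 0 -> y != 0 -> False) -> x * y = 0.
Proof.
move=> H; have [->|hx] := eqVneq x 0; first by rewrite mul0r.
have [->|hy] := eqVneq y 0; first by rewrite mulr0.
by case: (H hx hy).
Qed.

Lemma sum2_zero (N M : nat) (f : nat -> nat -> C) :
  (forall a b, (a < N)%N -> (b < M)%N -> f a b = 0) ->
  \sum_(a < N) \sum_(b < M) f a b = 0.
Proof.
move=> H; apply: big1 => a _; apply: big1 => b _; exact: H.
Qed.

Lemma sum2_single (N M : nat) (f : nat -> nat -> C) a0 b0 :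
  (a0 < N)%N -> (b0 < M)%N ->
  (forall a b, (a < N)%N -> (b < M)%N -> ~~ ((a == a0) && (b == b0)) -> f a b = 0) ->
  \sum_(a < N) \sum_(b < M) f a b = f a0 b0.
Proof.
move=> ha hb H.
rewrite (bigD1 (Ordinal ha)) //= (bigD1 (Ordinal hb)) //=.
rewrite big1 ?addr0; last first.
  move=> b hb'; apply: H => //; rewrite eqxx /=.
  by apply: contra hb' => /eqP hh; apply/eqP/val_inj.
rewrite big1 ?addr0 // => a ha'; apply: big1 => b _; apply: H => //.
by rewrite negb_and; apply/orP; left; apply: contra ha' => /eqP hh; apply/eqP/val_inj.
Qed.

Variables u v : nat.
Hypotheses (hu : (0 < u)%N) (hv : (0 < v)%N).

Definition St (F : series R) (m x0 y0 x1 y1 : nat) : Prop :=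
  [/\ forall i j, F i j != 0 -> (m <= u * i + v * j)%N,
      forall i j, F i j != 0 -> (u * i + v * j)%N = m -> (x0 <= i)%N /\ (i <= x1)%N,
      (u*x0 + v*y0)%N = m /\ (u*x1 + v*y1)%N = m,
      F x0 y0 != 0 & F x1 y1 != 0].

Definition yord (F : series R) k := forall i j, F i j != 0 -> (k <= j)%N.

Lemma St_mul F G mF x0 y0 x1 y1 mG x0' y0' x1' y1' :
  St F mF x0 y0 x1 y1 -> St G mG x0' y0' x1' y1' ->
  St (mulS F G) (mF+mG) (x0+x0') (y0+y0') (x1+x1') (y1+y1').
Proof.
move=> [F1 F2 [F3 F3'] F4 F5] [G1 G2 [G3 G3'] G4 G5]; split.
- move=> i j Hne; rewrite leqNgt; apply/negP => Hlt.
  suff: mulS F G i j = 0 by move=> h; move: Hne; rewrite h eqxx.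
  apply: (sum2_zero (f := fun a b => F a b * G (i - a)%N (j - b)%N)) => a b ha hb; apply: prod0 => /F1 h1 /G1 h2.
  have : (u * a + v * b + (u * (i - a) + v * (j - b)) = u * i + v * j)%N by nia.
  lia.
- move=> i j Hne Heq.
  case: (boolP ((x0+x0' <= i) && (i <= x1+x1'))%N) => [/andP[-> ->] //|Hb].
  suff: mulS F G i j = 0 by move=> h; move: Hne; rewrite h eqxx.
  apply: (sum2_zero (f := fun a b => F a b * G (i - a)%N (j - b)%N)) => a b ha hb; apply: prod0 => hF hG.
  have h1 := F1 _ _ hF; have h2 := G1 _ _ hG.
  have E : (u * a + v * b + (u * (i - a) + v * (j - b)) = u * i + v * j)%N by nia.
  have [h3 h4] : (u * a + v * b = mF /\ u * (i - a) + v * (j - b) = mG)%N by lia.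
  move: (F2 _ _ hF h3) (G2 _ _ hG h4) Hb; rewrite negb_and -!ltnNge; lia.
- split; lia.
- have -> : mulS F G (x0+x0') (y0+y0') = F x0 y0 * G x0' y0'.
    rewrite /mulS (sum2_single (f := fun a b => F a b * G (x0+x0' - a)%N (y0+y0' - b)%N) (a0:=x0) (b0:=y0)) ?addKn //;
      [ by rewrite ltnS leq_addr | by rewrite ltnS leq_addr | ].
    move=> a b ha hb Hab; apply: prod0 => hF hG.
    have h1 := F1 _ _ hF; have h2 := G1 _ _ hG.
    have E : (u * a + v * b + (u * (x0+x0' - a) + v * (y0+y0' - b)) = u * (x0+x0') + v * (y0+y0'))%N by nia.
    have [h3 h4] : (u * a + v * b = mF /\ u * (x0+x0' - a) + v * (y0+y0' - b) = mG)%N by nia.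
    have [h5 _] := F2 _ _ hF h3; have [h6 _] := G2 _ _ hG h4.
    have ea : a = x0 by lia.
    subst a; have eb : b = y0 by nia.
    by move: Hab; rewrite eb !eqxx.
  by rewrite mulf_neq0.
- have -> : mulS F G (x1+x1') (y1+y1') = F x1 y1 * G x1' y1'.
    rewrite /mulS (sum2_single (f := fun a b => F a b * G (x1+x1' - a)%N (y1+y1' - b)%N) (a0:=x1) (b0:=y1)) ?addKn //;
      [ by rewrite ltnS leq_addr | by rewrite ltnS leq_addr | ].
    move=> a b ha hb Hab; apply: prod0 => hF hG.
    have h1 := F1 _ _ hF; have h2 := G1 _ _ hG.
    have E : (u * a + v * b + (u * (x1+x1' - a) + v * (y1+y1' - b)) = u * (x1+x1') + v * (y1+y1'))%N by nia.
    have [h3 h4] : (u * a + v * b = mF /\ u * (x1+x1' - a) + v * (y1+y1' - b) = mG)%N by nia.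
    have [_ h5] := F2 _ _ hF h3; have [_ h6] := G2 _ _ hG h4.
    have ea : a = x1 by lia.
    subst a; have eb : b = y1 by nia.
    by move: Hab; rewrite eb !eqxx.
  by rewrite mulf_neq0.
Qed.

Lemma yord_mul F G k l : yord F k -> yord G l -> yord (mulS F G) (k + l).
Proof.
move=> HF HG i j Hne; rewrite leqNgt; apply/negP => Hlt.
suff: mulS F G i j = 0 by move=> h; move: Hne; rewrite h eqxx.
apply: (sum2_zero (f := fun a b => F a b * G (i - a)%N (j - b)%N)) => a b ha hb; apply: prod0 => hF hG.
have := HF _ _ hF; have := HG _ _ hG; lia.
Qed.

Lemma St_one : St (oneS R) 0 0 0 0 0.
Proof.
split.
- by [].
- move=> i j; rewrite /oneS; case: ifP => [/andP[/eqP -> /eqP ->] | ] //; by rewrite eqxx.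
- by rewrite !muln0.
- by rewrite /oneS eqxx oner_neq0.
- by rewrite /oneS eqxx oner_neq0.
Qed.

Lemma yord_one : yord (oneS R) 0.
Proof. by []. Qed.

Lemma St_pow F m x0 y0 x1 y1 k : St F m x0 y0 x1 y1 ->
  St (powS F k) (k * m) (k * x0) (k * y0) (k * x1) (k * y1).
Proof.
move=> HF; elim: k => [|k IH]; first by rewrite !mul0n; exact: St_one.
have -> : powS F k.+1 = mulS F (powS F k) by [].
rewrite !mulSn; exact: St_mul.
Qed.

Lemma yord_pow F l k : yord F l -> yord (powS F k) (k * l).
Proof.
move=> HF; elim: k => [|k IH]; first by rewrite mul0n.
have -> : powS F k.+1 = mulS F (powS F k) by [].
rewrite mulSn; exact: yord_mul.
Qed.


Lemma comp_ex (G P Q : series R) i j : compS G P Q i j != 0 ->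
  exists a b, G a b != 0 /\ mulS (powS P a) (powS Q b) i j != 0.
Proof.
move=> Hne.
case: (boolP [exists a : 'I_((i+j).+1), exists b : 'I_((i+j).+1),
   (G a b != 0) && (mulS (powS P a) (powS Q b) i j != 0)]).
- by move/existsP => [a /existsP [b /andP [h1 h2]]]; exists a, b.
- move=> Hn; move: Hne; rewrite /compS big1 ?eqxx // => a _; apply: big1 => b _.
  apply: prod0 => h1 h2; move: Hn; rewrite negb_exists => /forallP /(_ a).
  by rewrite negb_exists => /forallP /(_ b); rewrite h1 h2.
Qed.

Lemma comp_single (G P Q : series R) i j a0 b0 : (a0 <= i+j)%N -> (b0 <= i+j)%N ->
  (forall a b, G a b != 0 -> mulS (powS P a) (powS Q b) i j != 0 -> a = a0 /\ b = b0) ->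
  compS G P Q i j = G a0 b0 * mulS (powS P a0) (powS Q b0) i j.
Proof.
move=> ha hb H; rewrite /compS.
rewrite (sum2_single (f := fun a b => G a b * mulS (powS P a) (powS Q b) i j) (a0:=a0) (b0:=b0)) //.
move=> a b _ _ Hab; apply: prod0 => h1 h2; have [e1 e2] := H _ _ h1 h2.
by move: Hab; rewrite e1 e2 !eqxx.
Qed.

Variables (del A B gam d : nat) (p : nat -> C) (q : series R).
Hypotheses (hg : gam = (A + v)%N) (hB : B = (d + u)%N) (hdel : (0 < del)%N) (hd : (0 < d)%N).
Let c := (u * gam + v * d)%N.
Hypotheses (Sq : St q c A B gam d) (Yq : yord q d) (SP : St (liftz p) (u * del) del 0 del 0).

Let Hs a b := mulS (powS (liftz p) a) (powS q b).

Lemma St_Hs a b : St (Hs a b) (a * (u * del) + b * c) (a * del + b * A) (b * B) (a * del + b * gam) (b * d).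
Proof.
have := St_mul (St_pow a SP) (St_pow b Sq); by rewrite !muln0 !add0n.
Qed.

Lemma yord_Hs a b : yord (Hs a b) (b * d).
Proof.
have := yord_mul (yord_pow (k:=a) (_ : yord (liftz p) 0)) (yord_pow (k:=b) Yq).
by rewrite muln0 add0n; apply.
Qed.


Lemma step1 G x0 y0 x1 y1 : (del * v < c)%N -> St G (u*x1+v*y1) x0 y0 x1 y1 -> yord G y1 ->
  St (compS G (liftz p) q) (u*del*x1 + c*y1) (del*x1 + A*y1) (B*y1) (del*x1 + gam*y1) (d*y1)
  /\ yord (compS G (liftz p) q) (d*y1).
Proof.
move=> hK [G1 G2 [G3 G3'] G4 G5] YG.
have [K eK] : exists K, c = (del*v + K.+1)%N by exists (c - del*v).-1; lia.
have psi : forall a b, G a b != 0 -> (u*del*x1 + c*y1 <= a*(u*del) + b*c)%N /\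
    ((a*(u*del) + b*c = u*del*x1 + c*y1)%N -> a = x1 /\ b = y1).
  move=> a b hG; have h1 := G1 _ _ hG; have h2 := YG _ _ hG.
  rewrite eK; split; first nia.
  move=> E; have eb : b = y1 by nia.
  subst b; split => //; nia.
have eM0 : (u * (del * x1 + A * y1) + v * (B * y1) = u * del * x1 + c * y1)%N.
  by rewrite /c hg hB; nia.
have eM1 : (u * (del * x1 + gam * y1) + v * (d * y1) = u * del * x1 + c * y1)%N.
  by rewrite /c; nia.
split; [split|].
- move=> i j /comp_ex [a [b [hG hH]]].
  have [H1 _ _ _ _] := St_Hs a b; have := H1 _ _ hH; have [h _] := psi _ _ hG; lia.
- move=> i j /comp_ex [a [b [hG hH]]] E.
  have [H1 H2 _ _ _] := St_Hs a b; have h3 := H1 _ _ hH; have [h4 h5] := psi _ _ hG.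
  have [ea eb] : a = x1 /\ b = y1 by apply: h5; lia.
  subst a b; have [] := H2 _ _ hH (ltac:(lia)); lia.
- by split.
- rewrite (comp_single (a0:=x1) (b0:=y1)); first 1 last.
  + nia.
  + rewrite hB; nia.
  + move=> a b hG hH; have [H1 _ _ _ _] := St_Hs a b; have h3 := H1 _ _ hH.
    have [h4 h5] := psi _ _ hG; apply: h5; lia.
  + have [_ _ _ H4 _] := St_Hs x1 y1.
    have -> : (del * x1 + A * y1 = x1 * del + y1 * A)%N by lia.
    by rewrite (mulnC B) mulf_neq0.
- rewrite (comp_single (a0:=x1) (b0:=y1)); first 1 last.
  + nia.
  + nia.
  + move=> a b hG hH; have [H1 _ _ _ _] := St_Hs a b; have h3 := H1 _ _ hH.
    have [h4 h5] := psi _ _ hG; apply: h5; lia.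
  + have [_ _ _ _ H5] := St_Hs x1 y1.
    have -> : (del * x1 + gam * y1 = x1 * del + y1 * gam)%N by lia.
    by rewrite (mulnC d) mulf_neq0.
- move=> i j /comp_ex [a [b [hG hH]]].
  have := yord_Hs hH; have := YG _ _ hG; nia.
Qed.


Lemma step2 G x0 y0 x1 y1 : (del * v = c)%N -> St G (u*x1+v*y1) x0 y0 x1 y1 -> yord G y1 ->
  St (compS G (liftz p) q) (del*(u*x1+v*y1)) (del*x0 + A*y0) (B*y0) (del*x1 + gam*y1) (d*y1)
  /\ yord (compS G (liftz p) q) (d*y1).
Proof.
move=> hK [G1 G2 [G3 G3'] G4 G5] YG.
set m := (u*x1+v*y1)%N in G1 G2 G3 G3' *.
have psi : forall a b, G a b != 0 -> (del * m <= a*(u*del) + b*c)%N /\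
    ((a*(u*del) + b*c = del * m)%N -> (u*a+v*b = m)%N).
  move=> a b hG; have h1 := G1 _ _ hG.
  rewrite -hK; split; first nia.
  move=> E; nia.
have lo : forall a b, (u*a+v*b = m)%N -> (x0 <= a)%N ->
    (del*x0 + A*y0 <= a*del + b*A)%N /\ ((a*del + b*A = del*x0 + A*y0)%N -> a = x0 /\ b = y0).
  move=> a b E ha.
  have [k ek] : exists k, a = (x0 + k)%N by exists (a - x0)%N; lia.
  subst a.
  have e2 : (v * y0 = u * k + v * b)%N by lia.
  have e1 : (v * (del * k) = u * A * k + u * v * k + v * d * k)%N.
    by rewrite mulnA (mulnC v) hK /c hg; ring.
  have hb : (b <= y0)%N by nia.
  have e3 : (v * (A * (y0 - b)) = A * u * k)%N.
    rewrite mulnCA mulnBr; nia.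
  have key : (A * (y0 - b) <= del * k)%N.
    rewrite -(leq_pmul2l hv) e1 e3; nia.
  split; first nia.
  move=> E2.
  have k0 : k = 0%N.
    have : (A * (y0 - b) = del * k)%N by nia.
    move/(congr1 (muln v)); rewrite e1 e3 => E3.
    have : (u * v * k = 0)%N by lia.
    move/eqP; rewrite !muln_eq0 => /orP [/orP []|] /eqP; lia.
  subst k; split; first lia. nia.
have hi : forall a b, (u*a+v*b = m)%N -> (a <= x1)%N ->
    (a*del + b*gam <= del*x1 + gam*y1)%N /\ ((a*del + b*gam = del*x1 + gam*y1)%N -> a = x1 /\ b = y1).
  move=> a b E ha.
  have [k ek] : exists k, x1 = (a + k)%N by exists (x1 - a)%N; lia.
  subst x1.
  have e2 : (v * b = u * k + v * y1)%N by rewrite /m in E; lia.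
  have e1 : (v * (del * k) = u * gam * k + v * d * k)%N.
    by rewrite mulnA (mulnC v) hK /c; ring.
  have hb : (y1 <= b)%N by nia.
  have e3 : (v * (gam * (b - y1)) = gam * u * k)%N.
    rewrite mulnCA mulnBr; nia.
  have key : (gam * (b - y1) <= del * k)%N.
    rewrite -(leq_pmul2l hv) e1 e3; nia.
  split; first nia.
  move=> E2.
  have k0 : k = 0%N.
    have : (gam * (b - y1) = del * k)%N by nia.
    move/(congr1 (muln v)); rewrite e1 e3 => E3.
    have : (v * d * k = 0)%N by lia.
    move/eqP; rewrite !muln_eq0 => /orP [/orP []|] /eqP; lia.
  subst k; split; first lia. nia.
have eM0 : (u * (del * x0 + A * y0) + v * (B * y0) = del * m)%N.
  by rewrite -G3 /c hB; nia.
have eM1 : (u * (del * x1 + gam * y1) + v * (d * y1) = del * m)%N.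
  rewrite /m; move: hK; rewrite /c => hK'; nia.
split; [split|].
- move=> i j /comp_ex [a [b [hG hH]]].
  have [H1 _ _ _ _] := St_Hs a b; have := H1 _ _ hH; have [h _] := psi _ _ hG; lia.
- move=> i j /comp_ex [a [b [hG hH]]] E.
  have [H1 H2 _ _ _] := St_Hs a b; have h3 := H1 _ _ hH; have [h4 h5] := psi _ _ hG.
  have Em : (u*a+v*b = m)%N by apply: h5; lia.
  have [ha1 ha2] := G2 _ _ hG Em.
  have [] := H2 _ _ hH (ltac:(lia)).
  have [l1 _] := lo _ _ Em ha1; have [l2 _] := hi _ _ Em ha2; lia.
- by split.
- rewrite (comp_single (a0:=x0) (b0:=y0)); first 1 last.
  + nia.
  + rewrite hB; nia.
  + move=> a b hG hH; have [H1 H2 _ _ _] := St_Hs a b; have h3 := H1 _ _ hH.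
    have [h4 h5] := psi _ _ hG.
    have Em : (u*a+v*b = m)%N by apply: h5; lia.
    have [ha1 ha2] := G2 _ _ hG Em.
    have [l1 _] := H2 _ _ hH (ltac:(lia)).
    have [l2 l3] := lo _ _ Em ha1; apply: l3; lia.
  + have [_ _ _ H4 _] := St_Hs x0 y0.
    have -> : (del * x0 + A * y0 = x0 * del + y0 * A)%N by lia.
    by rewrite (mulnC B) mulf_neq0.
- rewrite (comp_single (a0:=x1) (b0:=y1)); first 1 last.
  + nia.
  + nia.
  + move=> a b hG hH; have [H1 H2 _ _ _] := St_Hs a b; have h3 := H1 _ _ hH.
    have [h4 h5] := psi _ _ hG.
    have Em : (u*a+v*b = m)%N by apply: h5; lia.
    have [ha1 ha2] := G2 _ _ hG Em.
    have [_ l1] := H2 _ _ hH (ltac:(lia)).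
    have [l2 l3] := hi _ _ Em ha2; apply: l3; lia.
  + have [_ _ _ _ H5] := St_Hs x1 y1.
    have -> : (del * x1 + gam * y1 = x1 * del + y1 * gam)%N by lia.
    by rewrite (mulnC d) mulf_neq0.
- move=> i j /comp_ex [a [b [hG hH]]].
  have := yord_Hs hH; have := YG _ _ hG; nia.
Qed.

End Alg.


Section Geo.
Variable R : realType.
Local Notation C := (R[i]).
Implicit Types g : series R.

Lemma lin_sum n (lam f h : 'I_n -> R) a b c :
  \sum_(k < n) lam k * (a * f k + b * h k + c) =
  a * (\sum_(k < n) lam k * f k) + b * (\sum_(k < n) lam k * h k) + c * \sum_(k < n) lam k.
Proof. rewrite !mulr_sumr -!big_split /=; apply: eq_bigr => k _; ring. Qed.

Lemma quad_up g x y x' y' : quadrants g x y -> x <= x' -> y <= y' -> quadrants g x' y'.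
Proof.
move=> [i [j [h1 [h2 h3]]]] hx hy; exists i, j; split => //; split; exact: le_trans hx || exact: le_trans hy.
Qed.

Lemma newton_quad g x y : quadrants g x y -> newton g x y.
Proof.
move=> H; exists 1%N, (fun _ => 1), (fun _ => x), (fun _ => y).
by rewrite !big_ord1 !mul1r; split => //; split.
Qed.

Lemma newton2 g x1 y1 x2 y2 t : quadrants g x1 y1 -> quadrants g x2 y2 -> 0 <= t <= 1 ->
  newton g (t * x1 + (1 - t) * x2) (t * y1 + (1 - t) * y2).
Proof.
move=> H1 H2 /andP[t0 t1].
exists 2%N, (fun k : 'I_2 => if k == ord0 then t else 1 - t),
  (fun k : 'I_2 => if k == ord0 then x1 else x2), (fun k : 'I_2 => if k == ord0 then y1 else y2).
rewrite !big_ord_recr !big_ord0 /= !add0r.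
split; first by move=> k; case: ifP => _ //; rewrite subr_ge0.
split; first by rewrite addrC subrK.
split; first by move=> k; case: ifP.
by [].
Qed.

Lemma quad_phi g (al be m x y : R) : 0 <= al -> 0 <= be ->
  (forall i j : nat, g i j != 0 -> m <= al * i%:R + be * j%:R) ->
  quadrants g x y -> m <= al * x + be * y.
Proof.
move=> ha hb H [i [j [h1 [h2 h3]]]]; have := H _ _ h1.
have : al * i%:R <= al * x by rewrite ler_wpM2l.
have : be * j%:R <= be * y by rewrite ler_wpM2l.
lra.
Qed.

Lemma newton_lb g (al be m x y : R) : 0 <= al -> 0 <= be ->
  (forall i j : nat, g i j != 0 -> m <= al * i%:R + be * j%:R) ->
  newton g x y -> m <= al * x + be * y.
Proof.
move=> ha hb H [n [lam [px [py [Hl [Hs [Hq [-> ->]]]]]]]].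
have E := lin_sum lam px py al be (- m).
rewrite Hs mulr1 in E.
have : 0 <= \sum_(k < n) lam k * (al * px k + be * py k + - m).
  apply: sumr_ge0 => k _; apply: mulr_ge0 => //; rewrite subr_ge0.
  exact: quad_phi (Hq k).
lra.
Qed.

Lemma newton_line g (al be m s lo x y : R) : 0 <= al -> 0 <= be ->
  (forall i j : nat, g i j != 0 -> m <= al * i%:R + be * j%:R) ->
  (forall px py, quadrants g px py -> al * px + be * py = m -> lo <= s * px) ->
  newton g x y -> al * x + be * y = m -> lo <= s * x.
Proof.
move=> ha hb H Hp [n [lam [px [py [Hl [Hs [Hq [-> ->]]]]]]]] Heq.
have E := lin_sum lam px py al be (- m).
rewrite Hs mulr1 Heq subrr in E.
have Z : forall k, lam k * (al * px k + be * py k + - m) = 0.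
  move=> k; apply: (psumr_eq0P (P := predT) (F := fun k => lam k * (al * px k + be * py k + - m))) => //.
  move=> k' _; apply: mulr_ge0 => //; rewrite subr_ge0; exact: quad_phi (Hq k').
have E2 := lin_sum lam px (fun _ => 0) s 0 (- lo).
rewrite Hs mulr1 in E2.
have : 0 <= \sum_(k < n) lam k * (s * px k + 0 * 0 + - lo).
  apply: sumr_ge0 => k _.
  have [->|hl] := eqVneq (lam k) 0; first by rewrite mul0r.
  apply: mulr_ge0 => //; rewrite subr_ge0 mul0r addr0; apply: Hp; first exact: Hq.
  by move: (Z k) => /eqP; rewrite mulf_eq0 (negbTE hl) /= subr_eq0 => /eqP.
rewrite E2 mul0r addr0 => h; lra.
Qed.


Lemma conv_eq (t a1 a2 m : R) : 0 < t -> t < 1 -> m <= a1 -> m <= a2 ->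
  m = t * a1 + (1 - t) * a2 -> a1 = m /\ a2 = m.
Proof. move=> *; split; nra. Qed.

Lemma vertex_ext g (al be m s : R) (x0 y0 : nat) : 0 <= al -> 0 < be -> s != 0 ->
  (forall i j : nat, g i j != 0 -> m <= al * i%:R + be * j%:R) ->
  (forall px py, quadrants g px py -> al * px + be * py = m -> s * x0%:R <= s * px) ->
  g x0 y0 != 0 -> al * x0%:R + be * y0%:R = m -> vertex g x0%:R y0%:R.
Proof.
move=> ha hb hs H Hp hg hm; split.
  by apply: newton_quad; exists x0, y0.
move=> x1 y1 x2 y2 t N1 N2 t0 t1 ex ey.
have hb' : 0 <= be by exact: ltW.
have L1 := newton_lb ha hb' H N1; have L2 := newton_lb ha hb' H N2.
have [E1 E2] : al * x1 + be * y1 = m /\ al * x2 + be * y2 = m.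
  apply: (conv_eq t0 t1) => //; rewrite -hm ex ey; ring.
have S1 := newton_line ha hb' H Hp N1 E1; have S2 := newton_line ha hb' H Hp N2 E2.
have [F1 _] : s * x1 = s * x0%:R /\ s * x2 = s * x0%:R.
  apply: (conv_eq t0 t1) => //; rewrite ex; ring.
have ex1 : x1 = x0%:R.
  by apply/eqP; rewrite -subr_eq0; move/eqP: F1; rewrite -subr_eq0 -mulrBr mulf_eq0 (negbTE hs).
split => //; subst x1.
have : be * (y1 - y0%:R) = 0 by rewrite mulrBr; lra.
by move/eqP; rewrite mulf_eq0 (negbTE (lt0r_neq0 hb)) subr_eq0 => /eqP.
Qed.

Lemma not_vertex_shift g (s1 s2 w1 w2 t e1 e2 : R) :
  quadrants g s1 s2 -> quadrants g w1 w2 -> 0 <= t <= 1 -> 0 <= e1 -> 0 <= e2 -> 0 < e1 + e2 ->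
  ~ vertex g (t * s1 + (1 - t) * w1 + e1) (t * s2 + (1 - t) * w2 + e2).
Proof.
move=> Hs Hw ht he1 he2 he [_ V].
have Q1 : forall h, 0 <= h -> newton g (t * s1 + (1 - t) * w1 + h * e1) (t * s2 + (1 - t) * w2 + h * e2).
  move=> h hh.
  have := newton2 (quad_up Hs (_ : s1 <= s1 + h * e1) (_ : s2 <= s2 + h * e2))
                  (quad_up Hw (_ : w1 <= w1 + h * e1) (_ : w2 <= w2 + h * e2)) ht.
  have -> : t * (s1 + h * e1) + (1 - t) * (w1 + h * e1) = t * s1 + (1 - t) * w1 + h * e1 by ring.
  have -> : t * (s2 + h * e2) + (1 - t) * (w2 + h * e2) = t * s2 + (1 - t) * w2 + h * e2 by ring.
  by apply; rewrite lerDl mulr_ge0.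
have h1 : (0 : R) <= 1/2 by lra.
have h3 : (0 : R) <= 3/2 by lra.
have [E1 E2] := V _ _ _ _ (1/2) (Q1 _ h1) (Q1 _ h3) ltac:(lra) ltac:(lra)
  ltac:(by field) ltac:(by field).
lra.
Qed.


Lemma sum_dropk n (lam f : 'I_n -> R) k :
  \sum_(l < n) (if l == k then 0 else lam l) * f l = \sum_(l < n) lam l * f l - lam k * f k.
Proof.
rewrite (bigD1 k) //= eqxx mul0r add0r [in RHS](bigD1 k) //= addrAC subrr add0r.
by apply: eq_bigr => l /negbTE ->.
Qed.

Lemma vertex_point g x y : vertex g x y -> exists i j : nat, g i j != 0 /\ x = i%:R /\ y = j%:R.
Proof.
move=> V; have [[n [lam [px [py [Hl [Hs [Hq [ex ey]]]]]]]] VV] := V.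
have [k hk] : exists k, 0 < lam k.
  case: (boolP [exists k, 0 < lam k]) => [/existsP [k hk]|Hn]; first by exists k.
  have : \sum_(k < n) lam k <= 0.
    apply: sumr_le0 => k _; rewrite leNgt; move: Hn; rewrite negb_exists => /forallP /(_ k).
    by [].
  rewrite Hs; lra.
have Pk : px k = x /\ py k = y.
  have hk1 : lam k <= 1.
    by rewrite -Hs (bigD1 k) //= lerDl sumr_ge0.
  have [lt1|eq1] : lam k < 1 \/ lam k = 1.
    by move: hk1; rewrite le_eqVlt => /orP [/eqP ->|->]; [right|left].
  - pose mu l := (if l == k then 0 else lam l) / (1 - lam k).
    have h1k : 0 < 1 - lam k by lra.
    have Nmu : newton g (\sum_(l < n) mu l * px l) (\sum_(l < n) mu l * py l).
      exists n, mu, px, py; split.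
        by move=> l; rewrite /mu; apply: divr_ge0; [case: ifP | lra].
      split; last by split.
      have E : \sum_(l < n) (if l == k then 0 else lam l) = 1 - lam k.
        rewrite (bigD1 k) //= eqxx add0r -Hs [in RHS](bigD1 k) //= addrAC subrr add0r.
        by apply: eq_bigr => l /negbTE ->.
      rewrite /mu -mulr_suml E; apply: divff; lra.
    have Ex : \sum_(l < n) mu l * px l = (x - lam k * px k) / (1 - lam k).
      rewrite /mu ex -sum_dropk mulr_suml; apply: eq_bigr => l _; rewrite /=; field; lra.
    have Ey : \sum_(l < n) mu l * py l = (y - lam k * py k) / (1 - lam k).
      rewrite /mu ey -sum_dropk mulr_suml; apply: eq_bigr => l _; rewrite /=; field; lra.
    rewrite Ex Ey in Nmu.
    have [] := VV _ _ _ _ (lam k) (newton_quad (Hq k)) Nmu hk lt1.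
    + field; lra.
    + field; lra.
    + by move=> -> ->.
  - have Z : forall l, l != k -> lam l = 0.
      have E : \sum_(l < n | l != k) lam l = 0.
        by move: Hs; rewrite (bigD1 k) //= eq1 => H; lra.
      move=> l hl; exact: (psumr_eq0P (fun l _ => Hl l) E).
    have S : forall f : 'I_n -> R, \sum_(l < n) lam l * f l = f k.
      move=> f; rewrite (bigD1 k) //= eq1 mul1r big1 ?addr0 // => l hl.
      by rewrite Z // mul0r.
    by rewrite ex ey !S.
have [i [j [hg [hi hj]]]] := Hq k.
exists i, j; split => //.
case: (boolP ((x == i%:R) && (y == j%:R))) => [/andP [/eqP -> /eqP ->] //|Hn].
exfalso.
have Hi : quadrants g i%:R j%:R by exists i, j.
apply: (@not_vertex_shift g i%:R j%:R i%:R j%:R 1 (x - i%:R) (y - j%:R) Hi Hi).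
- by rewrite ler01 lexx.
- rewrite subr_ge0 -(proj1 Pk) //.
- rewrite subr_ge0 -(proj2 Pk) //.
- move: Hn; rewrite negb_and => /orP [] hn.
  + have : i%:R < x by rewrite lt_neqAle eq_sym hn -(proj1 Pk) hi.
    have : j%:R <= y by rewrite -(proj2 Pk).
    lra.
  + have : j%:R < y by rewrite lt_neqAle eq_sym hn -(proj2 Pk) hj.
    have : i%:R <= x by rewrite -(proj1 Pk).
    lra.
- have -> : 1 * i%:R + (1 - 1) * i%:R + (x - i%:R) = x by ring.
  have -> : 1 * j%:R + (1 - 1) * j%:R + (y - j%:R) = y by ring.
  exact: V.
Qed.


Section Prev.
Variables (g : series R) (u v m : R) (x0 y0 x1 y1 : nat).
Hypotheses (hu : 0 < u) (hv : 0 < v)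
  (Hlb : forall i j : nat, g i j != 0 -> m <= u * i%:R + v * j%:R)
  (Hline : forall i j : nat, g i j != 0 -> u * i%:R + v * j%:R = m -> ((x0%:R : R) <= i%:R) && (i%:R <= (x1%:R : R)))
  (g0 : g x0 y0 != 0) (g1 : g x1 y1 != 0)
  (e0 : u * x0%:R + v * y0%:R = m) (e1 : u * x1%:R + v * y1%:R = m)
  (lt01 : (x0%:R : R) < x1%:R).

Lemma quad_line px py : quadrants g px py -> u * px + v * py = m ->
  x0%:R <= px /\ px <= x1%:R.
Proof.
move=> [i [j [hg [hi hj]]]] E; have := Hlb hg.
move=> h.
have : u * i%:R <= u * px by rewrite ler_wpM2l // ltW.
have : v * j%:R <= v * py by rewrite ler_wpM2l // ltW.
move=> h1 h2; have Ei : u * i%:R + v * j%:R = m by lra.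
have ha : 0 <= u * (px - i%:R) by rewrite mulr_ge0 ?subr_ge0 // ltW.
have hb : 0 <= v * (py - j%:R) by rewrite mulr_ge0 ?subr_ge0 // ltW.
have hab : u * (px - i%:R) + v * (py - j%:R) = 0 by rewrite !mulrBr; lra.
have : u * (px - i%:R) = 0 by lra.
move/eqP; rewrite mulf_eq0 (negbTE (lt0r_neq0 hu)) subr_eq0 => /eqP Epx.
by have /andP[] := Hline hg Ei; rewrite Epx.
Qed.

Lemma vert0 : vertex g x0%:R y0%:R.
Proof.
apply: (@vertex_ext g u v m 1) => //; [exact: ltW | exact: oner_neq0 | ].
move=> px py Q E; rewrite !mul1r; exact: (proj1 (quad_line Q E)).
Qed.

Lemma vert1 : vertex g x1%:R y1%:R.
Proof.
apply: (@vertex_ext g u v m (-1)) => //; [exact: ltW | by rewrite oppr_eq0 oner_neq0 | ].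
move=> px py Q E; rewrite !mulN1r lerN2; exact: (proj2 (quad_line Q E)).
Qed.

Lemma between x y : vertex g x y -> x0%:R < x -> x < x1%:R -> False.
Proof.
move=> V h0 h1.
have N := proj1 V.
have L := newton_lb (ltW hu) (ltW hv) Hlb N.
pose t := (x1%:R - x) / (x1%:R - x0%:R).
have t0 : 0 < t by apply: divr_gt0; lra.
have t1 : t < 1 by rewrite ltr_pdivrMr; lra.
have ex : x = t * x0%:R + (1 - t) * x1%:R by rewrite /t; field; lra.
pose ly := t * y0%:R + (1 - t) * y1%:R.
have Ely : u * x + v * ly = m by rewrite ex /ly; have := e0; have := e1; nra.
have Q0 : quadrants g x0%:R y0%:R by exists x0, y0.
have Q1 : quadrants g x1%:R y1%:R by exists x1, y1.
have [hy|hy] : ly < y \/ ly = y.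
  have : ly <= y.
    have : 0 <= v * (y - ly) by rewrite mulrBr; lra.
    by rewrite pmulr_rge0 // subr_ge0.
  by rewrite le_eqVlt => /orP [/eqP ->|->]; [right|left].
- apply: (@not_vertex_shift g x0%:R y0%:R x1%:R y1%:R t 0 (y - ly) Q0 Q1).
  + apply/andP; split; lra.
  + exact: lexx.
  + lra.
  + lra.
  + have -> : t * x0%:R + (1 - t) * x1%:R + 0 = x by rewrite addr0.
    have -> : t * y0%:R + (1 - t) * y1%:R + (y - ly) = y by rewrite /ly; ring.
    exact: V.
- have [E _] := (proj2 V) _ _ _ _ t (newton_quad Q0) (newton_quad Q1) t0 t1 ex (esym hy).
  lra.
Qed.

Lemma prev_from : prev_vertex g x0%:R y0%:R x1%:R y1%:R.
Proof.
split; first exact: vert1.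
split; first exact: vert0.
split => // x y V [h0 h1]; exact: (between V h0 h1).
Qed.

End Prev.

End Geo.


Section Q.
Variable R : realType.
Implicit Types g : series R.

Lemma below_nv g (U V Phi sx sy wx wy vx vy t : R) :
  quadrants g sx sy -> quadrants g wx wy -> 0 < t -> t <= 1 -> 0 < V ->
  vx = t * sx + (1 - t) * wx -> U * sx + V * sy < Phi -> U * wx + V * wy = Phi ->
  U * vx + V * vy = Phi -> ~ vertex g vx vy.
Proof.
move=> Qs Qw t0 t1 hV ex hs hw hv.
pose ly := t * sy + (1 - t) * wy.
have hly : ly < vy.
  have E : U * vx + V * ly = t * (U * sx + V * sy) + (1 - t) * (U * wx + V * wy).
    by rewrite ex /ly; ring.
  have Hlt : t * (U * sx + V * sy) < t * Phi by rewrite ltr_pM2l.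
  rewrite hw in E.
  have : 0 < V * (vy - ly) by rewrite mulrBr; lra.
  by rewrite pmulr_rgt0 // subr_gt0.
have := @not_vertex_shift _ g sx sy wx wy t 0 (vy - ly) Qs Qw.
rewrite addr0 -ex.
have -> : t * sy + (1 - t) * wy + (vy - ly) = vy by rewrite /ly; ring.
apply; [apply/andP; split; lra | exact: lexx | lra | lra].
Qed.

Lemma online_nv g (U V Phi sx sy wx wy vx vy t : R) :
  newton g sx sy -> newton g wx wy -> 0 < t -> t < 1 -> 0 < V ->
  vx = t * sx + (1 - t) * wx -> U * sx + V * sy = Phi -> U * wx + V * wy = Phi ->
  U * vx + V * vy = Phi -> vertex g vx vy -> sx = vx.
Proof.
move=> Ns Nw t0 t1 hV ex hs hw hv [_ Vv].
have ey : vy = t * sy + (1 - t) * wy.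
  have : V * (vy - (t * sy + (1 - t) * wy)) = 0.
    rewrite mulrBr; move: hv; rewrite ex => hv; nra.
  by move/eqP; rewrite mulf_eq0 (negbTE (lt0r_neq0 hV)) subr_eq0 => /eqP.
by have [] := Vv _ _ _ _ t Ns Nw t0 t1 ex ey.
Qed.

Lemma min_point g (a b i0 j0 : nat) : (0 < a)%N -> (0 < b)%N -> g i0 j0 != 0 ->
  exists i j, [/\ g i j != 0, (a * i + b * j <= a * i0 + b * j0)%N,
    (forall i' j', g i' j' != 0 -> (a * i + b * j <= a * i' + b * j')%N) &
    (forall i' j', g i' j' != 0 -> (a * i' + b * j' = a * i + b * j)%N -> (i' <= i)%N)].
Proof.
move=> ha hb hg.
pose P n := [exists i : 'I_n.+1, exists j : 'I_n.+1, (g i j != 0) && (a * i + b * j == n)%N].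
have PP : forall i j, g i j != 0 -> P (a * i + b * j)%N.
  move=> i j hij; apply/existsP.
  have hi : (i < (a * i + b * j).+1)%N by nia.
  have hj : (j < (a * i + b * j).+1)%N by nia.
  exists (Ordinal hi); apply/existsP; exists (Ordinal hj); by rewrite /= hij eqxx.
have exP : exists n, P n by exists (a * i0 + b * j0)%N; exact: PP.
case: (ex_minnP exP) => m Pm minm.
pose Q i := (i <= m)%N && [exists j : 'I_m.+1, (g i j != 0) && (a * i + b * j == m)%N].
have exQ : exists i, Q i.
  move/existsP: Pm => [i /existsP [j /andP [h1 /eqP h2]]].
  exists i; rewrite /Q; apply/andP; split; first by rewrite -ltnS.
  by apply/existsP; exists j; rewrite h1 h2 eqxx.
have ubQ : forall i, Q i -> (i <= m)%N by move=> i /andP [].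
case: (ex_maxnP exQ ubQ) => i Qi maxi.
move/andP: Qi => [_ /existsP [j /andP [hij /eqP ej]]].
exists i, j; split => //.
- by rewrite ej; apply: minm; apply: PP.
- by move=> i' j' h; rewrite ej; apply: minm; apply: PP.
- move=> i' j' h e; apply: maxi; rewrite /Q.
  have hi' : (i' <= m)%N by nia.
  have hj' : (j' < m.+1)%N by nia.
  rewrite hi' /=; apply/existsP; exists (Ordinal hj'); by rewrite /= h e ej eqxx.
Qed.

Lemma natr_phi (a b i j : nat) : ((a * i + b * j)%N%:R : R) = a%:R * i%:R + b%:R * j%:R.
Proof. by rewrite natrD !natrM. Qed.

Lemma min_vertex g (a b i j : nat) : (0 < a)%N -> (0 < b)%N -> g i j != 0 ->
  (forall i' j', g i' j' != 0 -> (a * i + b * j <= a * i' + b * j')%N) ->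
  (forall i' j', g i' j' != 0 -> (a * i' + b * j' = a * i + b * j)%N -> (i' <= i)%N) ->
  vertex g i%:R j%:R.
Proof.
move=> ha hb hg H1 H2.
apply: (@vert1 R g a%:R b%:R (a * i + b * j)%N%:R 0 i j).
- by rewrite ltr0n.
- by rewrite ltr0n.
- by move=> i' j' h; rewrite -natr_phi ler_nat; apply: H1.
- move=> i' j' h e; rewrite ler0n ler_nat /=; apply: (H2 _ j') => //.
  by move: e; rewrite -natr_phi => /eqP; rewrite eqr_nat => /eqP.
- exact: hg.
- by rewrite natr_phi.
Qed.


Lemma quadP g (i j : nat) : g i j != 0 -> quadrants g i%:R j%:R.
Proof. by move=> h; exists i, j. Qed.

Lemma nat_of_eqr (m n : nat) : (m%:R : R) = n%:R -> m = n.
Proof. by move/eqP; rewrite eqr_nat => /eqP. Qed.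

Lemma q_struct g (A B gam d : nat) : last_vertex g gam%:R d%:R ->
  prev_vertex g A%:R B%:R gam%:R d%:R ->
  [/\ (A < gam)%N, (d < B)%N,
      St (B - d) (gam - A) g ((B - d) * gam + (gam - A) * d) A B gam d & yord g d].
Proof.
move=> [V1 Lv] [_ [V0 [ltAg NB]]].
have ltAg' : (A < gam)%N by rewrite -(ltr_nat R).
have gAB : g A B != 0.
  have [i [j [h [ei ej]]]] := vertex_point V0.
  by rewrite (nat_of_eqr ei) (nat_of_eqr ej).
have ggd : g gam d != 0.
  have [i [j [h [ei ej]]]] := vertex_point V1.
  by rewrite (nat_of_eqr ei) (nat_of_eqr ej).
have QA := quadP gAB; have QG := quadP ggd.
have ltdB : (d < B)%N.
  case: (ltnP d B) => // hdB; exfalso.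
  apply: (@not_vertex_shift _ g A%:R B%:R A%:R B%:R 1 (gam%:R - A%:R) (d%:R - B%:R) QA QA).
  - by rewrite ler01 lexx.
  - by rewrite subr_ge0 ler_nat ltnW.
  - by rewrite subr_ge0 ler_nat.
  - have : (A%:R : R) < gam%:R by rewrite ltr_nat.
    have : (B%:R : R) <= d%:R by rewrite ler_nat.
    lra.
  - have -> : 1 * A%:R + (1 - 1) * A%:R + (gam%:R - A%:R) = (gam%:R : R) by ring.
    have -> : 1 * B%:R + (1 - 1) * B%:R + (d%:R - B%:R) = (d%:R : R) by ring.
    exact: V1.
set u := (B - d)%N; set v := (gam - A)%N.
have hu : (0 < u)%N by rewrite /u subn_gt0.
have hv : (0 < v)%N by rewrite /v subn_gt0.
have hg : gam = (A + v)%N by rewrite /v; lia.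
have hB : B = (d + u)%N by rewrite /u; lia.
set c := (u * gam + v * d)%N.
have eAc : (u * A + v * B)%N = c by rewrite /c hg hB; nia.
have hV : (0 : R) < v%:R by rewrite ltr0n.
have LB : forall i j, g i j != 0 -> (c <= u * i + v * j)%N.
  move=> i0 j0 h0; rewrite leqNgt; apply/negP => hlt.
  have [iS [jS [hs hle hmin hmax]]] := min_point hu hv h0.
  have Vs := min_vertex hu hv hs hmin hmax.
  have hlt' : (u * iS + v * jS < c)%N by lia.
  have Qs := quadP hs.
  have ePs : (u%:R * iS%:R + v%:R * jS%:R : R) < c%:R by rewrite -natr_phi ltr_nat.
  have ePG : (u%:R * gam%:R + v%:R * d%:R : R) = c%:R by rewrite -natr_phi.
  have ePA : (u%:R * A%:R + v%:R * B%:R : R) = c%:R by rewrite -natr_phi eAc.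
  case: (leqP iS A) => hisA.
  - have h1 : (iS%:R : R) <= A%:R by rewrite ler_nat.
    have h2 : (A%:R : R) < gam%:R by rewrite ltr_nat.
    apply: (@below_nv g u%:R v%:R c%:R iS%:R jS%:R gam%:R d%:R A%:R B%:R
              ((gam%:R - A%:R) / (gam%:R - iS%:R)) Qs QG _ _ hV _ ePs ePG ePA V0).
    + apply: divr_gt0; lra.
    + rewrite ler_pdivrMr; lra.
    + field; lra.
  case: (leqP gam iS) => hgis.
  - have h1 : (gam%:R : R) <= iS%:R by rewrite ler_nat.
    have h2 : (A%:R : R) < gam%:R by rewrite ltr_nat.
    apply: (@below_nv g u%:R v%:R c%:R iS%:R jS%:R A%:R B%:R gam%:R d%:R
              ((gam%:R - A%:R) / (iS%:R - A%:R)) Qs QA _ _ hV _ ePs ePA ePG V1).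
    + apply: divr_gt0; lra.
    + rewrite ler_pdivrMr; lra.
    + field; lra.
  - by apply: (NB _ _ Vs); rewrite !ltr_nat.
have LN : forall i j, g i j != 0 -> (u * i + v * j)%N = c -> (A <= i)%N /\ (i <= gam)%N.
  move=> i j h e.
  have ePs : (u%:R * i%:R + v%:R * j%:R : R) = c%:R by rewrite -natr_phi e.
  have ePG : (u%:R * gam%:R + v%:R * d%:R : R) = c%:R by rewrite -natr_phi.
  have ePA : (u%:R * A%:R + v%:R * B%:R : R) = c%:R by rewrite -natr_phi eAc.
  have Ns := newton_quad (quadP h).
  case: (ltnP i A) => hiA.
    exfalso.
    have h1 : (i%:R : R) < A%:R by rewrite ltr_nat.
    have h2 : (A%:R : R) < gam%:R by rewrite ltr_nat.
    have := @online_nv g u%:R v%:R c%:R i%:R j%:R gam%:R d%:R A%:R B%:R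
              ((gam%:R - A%:R) / (gam%:R - i%:R)) Ns (newton_quad QG).
    move=> /(_ _ _ hV _ ePs ePG ePA V0) H.
    have : (i%:R : R) = A%:R.
      apply: H; [apply: divr_gt0; lra | rewrite ltr_pdivrMr; lra | field; lra].
    lra.
  case: (leqP i gam) => hig; first by [].
  exfalso.
  have h1 : (gam%:R : R) < i%:R by rewrite ltr_nat.
  have h2 : (A%:R : R) < gam%:R by rewrite ltr_nat.
  have := @online_nv g u%:R v%:R c%:R i%:R j%:R A%:R B%:R gam%:R d%:R
            ((gam%:R - A%:R) / (i%:R - A%:R)) Ns (newton_quad QA).
  move=> /(_ _ _ hV _ ePs ePA ePG V1) H.
  have : (i%:R : R) = gam%:R.
    apply: H; [apply: divr_gt0; lra | rewrite ltr_pdivrMr; lra | field; lra].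
  lra.
have YD : yord g d.
  move=> i0 j0 h0; rewrite leqNgt; apply/negP => hlt.
  have hK : (0 < i0.+1)%N by [].
  have [iS [jS [hs hle hmin hmax]]] := min_point (ltn0Sn 0) hK h0.
  have Vs := min_vertex (ltn0Sn 0) hK hs hmin hmax.
  have : (iS%:R : R) <= gam%:R := Lv _ _ Vs.
  rewrite ler_nat => hisg.
  have hjs : (jS <= j0)%N by nia.
  have Qs := quadP hs.
  apply: (@not_vertex_shift _ g iS%:R jS%:R iS%:R jS%:R 1 (gam%:R - iS%:R) (d%:R - jS%:R) Qs Qs).
  - by rewrite ler01 lexx.
  - by rewrite subr_ge0 ler_nat.
  - by rewrite subr_ge0 ler_nat; lia.
  - have : (jS%:R : R) < d%:R by rewrite ltr_nat; lia.
    have : (iS%:R : R) <= gam%:R by rewrite ler_nat.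
    lra.
  - have -> : 1 * iS%:R + (1 - 1) * iS%:R + (gam%:R - iS%:R) = (gam%:R : R) by ring.
    have -> : 1 * jS%:R + (1 - 1) * jS%:R + (d%:R - jS%:R) = (d%:R : R) by ring.
    exact: V1.
split => //; split => //.
Qed.

End Q.


Lemma gamma_nS gam del d n :
  gamma_n gam del d n.+1 = (del * gamma_n gam del d n + gam * d ^ n)%N.
Proof.
rewrite /gamma_n big_ord_recr /= subnn expn0 mul1n.
have -> : (\sum_(i < n) del ^ (n - widen_ord (leqnSn n) i) * d ^ widen_ord (leqnSn n) i
   = del * \sum_(k < n) del ^ (n.-1 - k) * d ^ k)%N.
  rewrite big_distrr /=; apply: eq_bigr => k _.
  have -> : (n - k = (n.-1 - k).+1)%N by have := ltn_ord k; lia.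
  by rewrite expnS mulnA.
by rewrite mulnDr mulnCA.
Qed.

Lemma Astar_nS A B del n :
  Astar_n A B del n.+1 = (del * Astar_n A B del n + B ^ n * A)%N.
Proof.
rewrite /Astar_n big_ord_recr /= subnn expn0 mul1n.
have -> : (\sum_(i < n) del ^ (n - widen_ord (leqnSn n) i) * B ^ widen_ord (leqnSn n) i
   = del * \sum_(k < n) del ^ (n.-1 - k) * B ^ k)%N.
  rewrite big_distrr /=; apply: eq_bigr => k _.
  have -> : (n - k = (n.-1 - k).+1)%N by have := ltn_ord k; lia.
  by rewrite expnS mulnA.
by rewrite mulnDl mulnA.
Qed.

Section Final.
Variable R : realType.

Lemma final_pack (G : series R) (u v M x0 y0 x1 y1 : nat) : (0 < u)%N -> (0 < v)%N ->
  St u v G M x0 y0 x1 y1 -> (x0 < x1)%N ->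
  [/\ prev_vertex G x0%:R y0%:R x1%:R y1%:R,
      ((y1%:R - y0%:R) / (x1%:R - x0%:R) : R) = - (v%:R / u%:R)^-1 &
      intercept (x1%:R : R) y1%:R x0%:R y0%:R = M%:R / v%:R].
Proof.
move=> hu hv [S1 S2 [S3 S4] S5 S6] hx.
have hU : (0 : R) < u%:R by rewrite ltr0n.
have hV : (0 : R) < v%:R by rewrite ltr0n.
have hX : (x0%:R : R) < x1%:R by rewrite ltr_nat.
have E0 : (u%:R * x0%:R + v%:R * y0%:R : R) = M%:R by rewrite -natr_phi S3.
have E1 : (u%:R * x1%:R + v%:R * y1%:R : R) = M%:R by rewrite -natr_phi S4.
have nV : (v%:R : R) != 0 by rewrite lt0r_neq0.
have nX : (x1%:R - x0%:R : R) != 0 by rewrite subr_eq0 gt_eqF.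
have ey1 : (y1%:R : R) = (M%:R - u%:R * x1%:R) / v%:R by rewrite -E1; field.
have ey0 : (y0%:R : R) = (M%:R - u%:R * x0%:R) / v%:R by rewrite -E0; field.
split.
- apply: (@prev_from R G u%:R v%:R M%:R x0 y0 x1 y1) => //.
  + by move=> i j h; rewrite -natr_phi ler_nat; apply: S1.
  + move=> i j h e.
    have e' : (u * i + v * j)%N = M by move: e; rewrite -natr_phi => /eqP; rewrite eqr_nat => /eqP.
    by have [a b] := S2 _ _ h e'; rewrite !ler_nat a b.
- by rewrite ey1 ey0 invf_div; field; rewrite nV nX.
- have nX' : (x0%:R - x1%:R : R) != 0 by rewrite subr_eq0 lt_eqF.
  rewrite /intercept ey1 ey0; field; rewrite ?nV ?nX' //.
Qed.


Lemma ineq1 u v gam del d : (0 < del)%N -> (del * v < u * gam + v * d)%N -> forall n,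
  (v * del ^ n.+1 < u * gamma_n gam del d n.+1 + v * d ^ n.+1)%N.
Proof.
move=> hdel hK; elim=> [|n IH].
  by rewrite gamma_nS /gamma_n big_ord0 muln0 expn0 !expn1 muln1 mulnC; lia.
rewrite gamma_nS (expnS del n.+1) (expnS d n.+1).
set g := gamma_n gam del d n.+1 in IH *; set e := (d ^ n.+1)%N in IH *; set f := (del ^ n.+1)%N in IH *.
have h1 : (del * (v * f) < del * (u * g + v * e))%N by rewrite ltn_pmul2l.
have h2 : (del * v * e <= (u * gam + v * d) * e)%N by rewrite leq_mul2r ltnW ?orbT.
nia.
Qed.

Lemma eq2 u v gam del d : (del * v = u * gam + v * d)%N -> forall n,
  (v * del ^ n = u * gamma_n gam del d n + v * d ^ n)%N.
Proof.
move=> hK; elim=> [|n IH].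
  by rewrite /gamma_n big_ord0 !muln0 !expn0 add0n.
rewrite gamma_nS !expnS.
have : (del * (v * del ^ n) = del * (u * gamma_n gam del d n + v * d ^ n))%N by rewrite IH.
nia.
Qed.

Lemma St_m (G : series R) u v m m' x0 y0 x1 y1 : m = m' -> St u v G m x0 y0 x1 y1 -> St u v G m' x0 y0 x1 y1.
Proof. by move->. Qed.

End Final.

Theorem proposition3 (R : realType) (p : nat -> R[i]) (q : series R)
  (delta : nat) (gamma d A B : nat) :
  (1 <= delta)%N ->
  (forall k, (k < delta)%N -> p k = 0) -> p delta != 0 ->
  convergent1 p ->
  q 0%N 0%N = 0 -> (exists i j, q i j != 0) ->
  convergent2 q ->
  (* (gamma,d) = (n_s,m_s) is the last vertex, (A,B) = (n_{s-1},m_{s-1}) the one before it *)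
  last_vertex q gamma%:R d%:R ->
  prev_vertex q A%:R B%:R gamma%:R d%:R ->
  (* Case 2: delta <= T_{s-1} *)
  (delta%:R <= intercept (gamma%:R : R) d%:R A%:R B%:R) ->
  (0 < d)%N ->
  (* l_1 = (n_s - n_{s-1}) / (m_{s-1} - m_s) *)
  let l1 : R := (gamma%:R - A%:R) / (B%:R - d%:R) in
  ((delta%:R < intercept (gamma%:R : R) d%:R A%:R B%:R) ->
    forall n : nat, (1 <= n)%N ->
      let gn := gamma_n gamma delta d n in
      let An := (gn - (gamma - A) * d ^ n.-1)%N in
      let Bn := (B * d ^ n.-1)%N in
      prev_vertex (Qiter p q n) An%:R Bn%:R gn%:R (d ^ n)%:R /\
      ((d ^ n)%:R - Bn%:R) / (gn%:R - An%:R) = - l1^-1 /\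
      (delta ^ n)%:R < intercept (gn%:R : R) (d ^ n)%:R An%:R Bn%:R) /\
  ((delta%:R = intercept (gamma%:R : R) d%:R A%:R B%:R) ->
    forall n : nat, (1 <= n)%N ->
      let gn := gamma_n gamma delta d n in
      let An := Astar_n A B delta n in
      let Bn := (B ^ n)%N in
      prev_vertex (Qiter p q n) An%:R Bn%:R gn%:R (d ^ n)%:R /\
      ((d ^ n)%:R - Bn%:R) / (gn%:R - An%:R) = - l1^-1 /\
      (delta ^ n)%:R = intercept (gn%:R : R) (d ^ n)%:R An%:R Bn%:R).
Proof.
move=> hdel hp0 hpd _ q00 _ _ Hlast Hprev Hcase hd l1.
have [ltAg ltdB Sq Yq] := q_struct Hlast Hprev.
set u := (B - d)%N in Sq; set v := (gamma - A)%N in Sq.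
have hu : (0 < u)%N by rewrite /u subn_gt0.
have hv : (0 < v)%N by rewrite /v subn_gt0.
have hg : gamma = (A + v)%N by rewrite /v; lia.
have hB : B = (d + u)%N by rewrite /u; lia.
set c := (u * gamma + v * d)%N in Sq.
have SP : St u v (liftz p) (u * delta) delta 0 delta 0.
  split.
  - move=> i j; rewrite /liftz; have [->|hj] := eqVneq j 0%N; last by rewrite eqxx.
    move=> h; rewrite muln0 addn0 leq_mul2l; apply/orP; right.
    by rewrite leqNgt; apply/negP => /hp0; apply/eqP.
  - move=> i j; rewrite /liftz; have [->|hj] := eqVneq j 0%N; last by rewrite eqxx.
    move=> h e; have : i = delta by nia.
    by move->.
  - by rewrite !muln0 !addn0.
  - by rewrite /liftz eqxx.
  - by rewrite /liftz eqxx.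
have Sw : St u v (wS R) (u * 0 + v * 1) 0 1 0 1.
  split.
  - move=> i j; rewrite /wS; case: ifP => [/andP[/eqP -> /eqP ->] //|]; by rewrite eqxx.
  - move=> i j; rewrite /wS; case: ifP => [/andP[/eqP -> /eqP ->] //|]; by rewrite eqxx.
  - by [].
  - by rewrite /wS /= oner_neq0.
  - by rewrite /wS /= oner_neq0.
have Yw : yord (wS R) 1.
  move=> i j; rewrite /wS; case: ifP => [/andP[_ /eqP -> //]|]; by rewrite eqxx.
have hU : (0 : R) < u%:R by rewrite ltr0n.
have hV : (0 : R) < v%:R by rewrite ltr0n.
have nV : (v%:R : R) != 0 by rewrite lt0r_neq0.
have nU : (u%:R : R) != 0 by rewrite lt0r_neq0.
have hl1 : l1 = v%:R / u%:R.
  by rewrite /l1 /u /v !natrB // ltnW.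
have hint : intercept (gamma%:R : R) d%:R A%:R B%:R = c%:R / v%:R.
  rewrite /intercept /c natrD !natrM hB hg !natrD.
  field; rewrite nV /=.
  have -> : (A%:R - (A%:R + v%:R) : R) = - v%:R by ring.
  by rewrite oppr_eq0.
split.
- move=> hlt.
  have hK : (delta * v < c)%N.
    by move: hlt; rewrite hint ltr_pdivlMr // -natrM ltr_nat.
  have IH : forall n, exists x0 y0,
      St u v (Qiter p q n) (u * gamma_n gamma delta d n + v * d ^ n) x0 y0
         (gamma_n gamma delta d n) (d ^ n) /\ yord (Qiter p q n) (d ^ n).
    elim=> [|n [x0 [y0 [S Y]]]].
      exists 0%N, 1%N; rewrite /gamma_n big_ord0 muln0 expn0 /=; split; [exact: Sw | exact: Yw].
    have [S' Y'] := step1 hu hv hg hB hdel hd Sq Yq SP hK S Y.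
    exists (delta * gamma_n gamma delta d n + A * d ^ n)%N, (B * d ^ n)%N.
    rewrite gamma_nS (expnS d n) /=.
    split; last exact: Y'.
    apply: St_m S'; rewrite /c; nia.
  move=> [//|n] _ gn An Bn; rewrite /An /Bn /gn /=.
  have [x0 [y0 [S Y]]] := IH n.
  have [S' _] := step1 hu hv hg hB hdel hd Sq Yq SP hK S Y.
  have S'' : St u v (Qiter p q n.+1) (u * gamma_n gamma delta d n.+1 + v * d ^ n.+1)
      (gamma_n gamma delta d n.+1 - (gamma - A) * d ^ n) (B * d ^ n)
      (gamma_n gamma delta d n.+1) (d ^ n.+1).
    rewrite gamma_nS (expnS d n) /=.
    have -> : (delta * gamma_n gamma delta d n + gamma * d ^ n - (gamma - A) * d ^ n
               = delta * gamma_n gamma delta d n + A * d ^ n)%N by nia.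
    apply: St_m S'; rewrite /c; nia.
  have hx : (gamma_n gamma delta d n.+1 - (gamma - A) * d ^ n < gamma_n gamma delta d n.+1)%N.
    rewrite gamma_nS; have := expn_gt0 d n; rewrite hd /= => he; nia.
  have [P1 P2 P3] := final_pack hu hv S'' hx.
  split; first exact: P1.
  split; first by rewrite P2 hl1.
  rewrite P3 ltr_pdivlMr // -natrM ltr_nat mulnC.
  exact: (ineq1 hdel hK n).
- move=> heq.
  have hK : (delta * v = c)%N.
    move: heq; rewrite hint => /(congr1 (fun x => x * v%:R)); rewrite divfK // -natrM.
    by move/eqP; rewrite eqr_nat => /eqP.
  have IH : forall n,
      St u v (Qiter p q n) (u * gamma_n gamma delta d n + v * d ^ n) (Astar_n A B delta n) (B ^ n)
         (gamma_n gamma delta d n) (d ^ n) /\ yord (Qiter p q n) (d ^ n).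
    elim=> [|n [S Y]].
      rewrite /gamma_n /Astar_n !big_ord0 muln0 mul0n !expn0 /=; split; [exact: Sw | exact: Yw].
    have [S' Y'] := step2 hu hv hg hB hdel hd Sq Yq SP hK S Y.
    rewrite gamma_nS Astar_nS (expnS d n) (expnS B n) (mulnC (B ^ n)%N A) /=.
    split; last exact: Y'.
    apply: St_m S'; rewrite /c in hK; nia.
  move=> [//|n] _ gn An Bn; rewrite /An /Bn /gn.
  have [S _] := IH n.+1.
  have hx : (Astar_n A B delta n.+1 < gamma_n gamma delta d n.+1)%N.
    have [[_ S2 [S3 S4] S5 _] _] := IH n.
    have [_ ha] := S2 _ _ S5 S3.
    rewrite gamma_nS Astar_nS.
    set a := Astar_n A B delta n in ha S3 *; set g := gamma_n gamma delta d n in ha S3 *.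
    set b := (B ^ n)%N in S3 *; set e := (d ^ n)%N in S3 *.
    have hb : (0 < b)%N by rewrite /b expn_gt0; apply/orP; left; lia.
    have [z ez] : exists z, g = (a + z)%N by exists (g - a)%N; lia.
    rewrite ez in S3 *.
    have E : (u * z + v * e = v * b)%N by lia.
    have h1 := congr1 (muln z) hK; have h2 := congr1 (muln A) E; have h3 := congr1 (muln v) E.
    rewrite -(ltn_pmul2l hv); rewrite /c in h1; nia.
  have [P1 P2 P3] := final_pack hu hv S hx.
  split; first exact: P1.
  split; first by rewrite P2 hl1.
  rewrite P3 -(eq2 hK) natrM; field; by rewrite ?nV.
Qed.
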